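(* Let $F\subset S^3$ be a (connected, oriented) Seifert surface for a knot or link $K$ with $\operatorname{rank}H_1(F;\mathbb Z)=n$, and let $\alpha_1,\dots,\alpha_n$ be pairwise disjoint properly embedded arcs in $F$ such that $F\setminus\bigcup_i\alpha_i$ is a disk. For integers $k_1,\dots,k_n$, let $\widetilde F$ be the surface obtained from $F$ by full-twisting $F$ along each arc $\alpha_i$ exactly $k_i$ times, in the direction for which the Seifert form value of the loop $\ell_i$ dual to $\alpha_i$ (the embedded loop meeting $\bigcup_j\alpha_j$ transversely in exactly one point of $\alpha_i$) increases by $k_i$; and let $\widetilde K=\partial\widetilde F$. Then there exist positive integers $N_1,\dots,N_n$ such that whenever $k_i\ge N_i$ for all $i$, the Alexander polynomial of $\widetilde K$ has degree $n$ and all of its zeros have modulus $1$.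
   Context: The (reduced) Alexander polynomial of a knot or link with Seifert matrix $V$ is $\det(tV-V^T)$. Twisting along $\alpha_i$ changes only the self-linking of $\ell_i$, so a Seifert matrix of $\widetilde F$ with respect to the dual loops is obtained from one of $F$ by adding $k_i$ to the $i$-th diagonal entry. *)

(* Defs.v *)
From HB Require Import structures.
From mathcomp Require Import all_boot all_order all_algebra all_field.
Set Implicit Arguments. Unset Strict Implicit. Unset Printing Implicit Defensive.
Import Order.TTheory GRing.Theory Num.Theory.
Local Open Scope ring_scope.

Definition alexander_poly (n : nat) (V : 'M[int]_n) : {poly int} :=
  \det ('X *: map_mx polyC V - map_mx polyC V^T).

(* Seifert matrix of the twisted surface w.r.t. the dual loops:
   k_i added to the i-th diagonal entry. *)
Definition twist_seifert (n : nat) (V : 'M[int]_n) (k : 'I_n -> int) : 'M[int]_n :=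
  V + diag_mx (\row_i k i).

(* Main.v *)
Require Import Defs.
From HB Require Import structures.
From mathcomp Require Import all_boot all_order all_algebra all_field.
Import Order.TTheory GRing.Theory Num.Theory.
Local Open Scope ring_scope.

Lemma sq_le_sum (n : nat) (x : 'I_n -> algC) i :
  `|x i| ^+ 2 <= \sum_l `|x l| ^+ 2.
Proof.
rewrite (bigD1 i) //= lerDl; apply: sumr_ge0 => l _; exact: exprn_ge0.
Qed.

Lemma core (n : nat) (V : 'M[int]_n) (k : 'I_n -> int) (v : 'rV[algC]_n) :
  (forall i, ((\sum_i0 \sum_j `|V i0 j|%N).+1)%:Z <= k i) -> v != 0 ->
  \sum_i \sum_j v 0 i * (twist_seifert V k i j)%:~R * (v 0 j)^* != 0.
Proof.
set T := (\sum_i0 \sum_j `|V i0 j|%N)%N => hk hv.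
set S := \sum_l `|v 0 l| ^+ 2.
have S0 : 0 < S.
  rewrite lt0r sumr_ge0 ?andbT; last by move=> l _; exact: exprn_ge0.
  apply: contra hv => /eqP HS; apply/eqP/matrixP => a b.
  rewrite ord1 !mxE.
  have h : `|v 0 b| ^+ 2 = 0.
    by apply: (psumr_eq0P _ HS) => // l _; exact: exprn_ge0.
  by move/eqP: h; rewrite expf_eq0 /= normr_eq0 => /eqP.
have split : \sum_i \sum_j v 0 i * (twist_seifert V k i j)%:~R * (v 0 j)^* =
   \sum_i (k i)%:~R * `|v 0 i| ^+ 2 +
   \sum_i \sum_j v 0 i * (V i j)%:~R * (v 0 j)^*.
  rewrite -big_split /=; apply: eq_bigr => i _.
  rewrite (bigD1 i) //= [X in _ = _ + X](bigD1 i) //= addrA; congr (_ + _).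
    rewrite /twist_seifert !mxE eqxx mulr1n intrD mulrDr mulrDl normCK.
    by rewrite addrC mulrCA mulrA.
  apply: eq_bigr => j /negbTE ji.
  by rewrite /twist_seifert !mxE eq_sym ji mulr0n addr0.
rewrite split; apply/negP => /eqP H.
have HD : \sum_i (k i)%:~R * `|v 0 i| ^+ 2 =
          - \sum_i \sum_j v 0 i * (V i j)%:~R * (v 0 j)^*.
  by apply/eqP; rewrite -addr_eq0 H.
have lo : (T.+1)%:R * S <= \sum_i (k i)%:~R * `|v 0 i| ^+ 2.
  rewrite /S mulr_sumr; apply: ler_sum => i _.
  apply: ler_wpM2r; first exact: exprn_ge0.
  by rewrite -[X in X <= _]/((T.+1)%:Z%:~R) ler_int.
have hi : `|\sum_i \sum_j v 0 i * (V i j)%:~R * (v 0 j)^*| <= T%:R * S.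
  apply: le_trans (ler_norm_sum _ _ _) _.
  rewrite /T natr_sum mulr_suml; apply: ler_sum => i _.
  apply: le_trans (ler_norm_sum _ _ _) _.
  rewrite natr_sum mulr_suml; apply: ler_sum => j _.
  rewrite !normrM norm_conjC natr_absz intr_norm mulrAC [X in _ <= X]mulrC.
  apply: ler_wpM2r; first exact: normr_ge0.
  apply: le_trans (real_leif_mean_square (normr_real (v 0 i)) (normr_real (v 0 j))).1 _.
  by rewrite ler_pdivrMr ?ltr0n // mulr_natr mulr2n lerD ?sq_le_sum.
have ge : 0 <= \sum_i (k i)%:~R * `|v 0 i| ^+ 2.
  by apply: le_trans (lo); rewrite mulr_ge0 ?ltW.
have : (T.+1)%:R * S <= T%:R * S.
  apply: le_trans lo _; apply: le_trans hi.
  by rewrite -(ger0_norm ge) HD normrN.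
by rewrite ler_pM2r // ler_nat ltnn.
Qed.
Lemma alex_map n (W : 'M[int]_n) :
  map_poly (intr : int -> algC) (alexander_poly W) =
  \det ('X *: map_mx polyC (map_mx intr W) - map_mx polyC (map_mx intr W)^T).
Proof.
rewrite /alexander_poly -det_map_mx; congr (\det _); apply/matrixP => i j.
by rewrite !mxE rmorphB rmorphM /= map_polyX !map_polyC.
Qed.

Lemma alex_eval n (A : 'M[algC]_n) z :
  (\det ('X *: map_mx polyC A - map_mx polyC A^T)).[z] = \det (z *: A - A^T).
Proof.
rewrite -[LHS]/(horner_eval z _) -det_map_mx; congr (\det _); apply/matrixP => i j.
by rewrite !mxE /= horner_evalE !hornerE.
Qed.

Lemma alex_char n (A : 'M[algC]_n) : A \in unitmx ->
  \det ('X *: map_mx polyC A - map_mx polyC A^T) =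
  char_poly (A^T *m invmx A) * (\det A)%:P.
Proof.
move=> uA; rewrite -det_map_mx /= /char_poly -det_mulmx; congr (\det _).
rewrite /char_poly_mx mulmxBl mul_scalar_mx -map_mxM mulmxKV //.
Qed.

Theorem theorem12p9 (n : nat) (V : 'M[int]_n) :
  exists N : 'I_n -> nat,
    (forall i, (0 < N i)%N) /\
    forall k : 'I_n -> int,
      (forall i, (N i)%:Z <= k i) ->
      size (alexander_poly (twist_seifert V k)) = n.+1 /\
      forall z : algC,
        root (map_poly intr (alexander_poly (twist_seifert V k))) z ->
        `|z| = 1.
Proof.
exists (fun _ => (\sum_i0 \sum_j `|V i0 j|%N).+1); split => // k hk.
have C := fun v => @core n V k v hk.
set W := twist_seifert V k.
set Wc := map_mx (intr : int -> algC) W.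
have uW : Wc \in unitmx.
  rewrite unitmxE unitfE; apply/negP => /det0P [v v0 hv].
  move: (C v v0); rewrite exchange_big /=.
  have -> : \sum_j \sum_i v 0 i * (twist_seifert V k i j)%:~R * (v 0 j)^* =
            \sum_j (v *m Wc) 0 j * (v 0 j)^*.
    apply: eq_bigr => j _; rewrite !mxE mulr_suml; apply: eq_bigr => i _.
    by rewrite !mxE.
  by rewrite hv big1 ?eqxx // => j _; rewrite mxE mul0r.
split.
  rewrite -(size_map_inj_poly (f := intr : int -> algC) intr_inj) //.
  rewrite alex_map alex_char // mulrC mul_polyC size_scale ?size_char_poly //.
  by rewrite -unitfE -unitmxE.
move=> z; rewrite /root alex_map alex_eval => /det0P [v v0 hv].
set a := \sum_i \sum_j v 0 i * (twist_seifert V k i j)%:~R * (v 0 j)^*.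
set b := \sum_i \sum_j v 0 i * (twist_seifert V k j i)%:~R * (v 0 j)^*.
have ha : a != 0 := C v v0.
have zab : z * a = b.
  apply/eqP; rewrite -subr_eq0; apply/eqP.
  rewrite /a /b [X in z * X]exchange_big [X in _ - X]exchange_big /=.
  rewrite mulr_sumr -sumrB.
  apply: big1 => j _.
  have : (v *m (z *: Wc - Wc^T)) 0 j = 0 by rewrite hv mxE.
  rewrite mxE => hj.
  rewrite mulr_sumr -sumrB.
  apply: etrans (_ : _ = (\sum_i v 0 i * (z *: Wc - Wc^T) i j) * (v 0 j)^*) _;
    last by rewrite hj mul0r.
  rewrite mulr_suml.
  apply: eq_bigr => i _; rewrite !mxE.
  by rewrite mulrBr mulrBl !mulrA [z * v 0 i]mulrC.
have bc : b^* = a.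
  rewrite /b rmorph_sum /=.
  under eq_bigr => i _ do rewrite rmorph_sum /=.
  rewrite exchange_big /=; apply: eq_bigr => i _; apply: eq_bigr => j _.
  by rewrite !rmorphM /= conjCK rmorph_int mulrC mulrA mulrAC.
have : `|z| * `|a| = 1 * `|a|.
  by rewrite -normrM zab -norm_conjC bc mul1r.
by move/(mulIf _); apply; rewrite normr_eq0.
Qed.
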